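(* Let $d>k\geq1$, $\varepsilon\in(0,1)$, let $A\in\mathbb{R}^{d\times d}$ be symmetric positive semidefinite with $\lambda_k>\lambda_{k+1}$, $\beta>0$ with $\lambda_k>2\sqrt\beta\geq\lambda_{k+1}$, $X_0\in\mathrm{St}(d,k)$ with $\cos\theta_k(U_k,X_0)>0$, and consider ANPM with perturbations satisfying for all $t\geq0$: $\|U_{-k}^\top\Xi_t\|_2\leq c(\lambda_k-2\sqrt\beta)\varepsilon$ and $\|U_k^\top\Xi_t\|_2\leq c(\lambda_k-2\sqrt\beta)\cos\theta_k(U_k,X_t)$, $c=1/32$. Then for all $t\geq1$, $$H_{t+1}C_{t+1}=\Lambda_{-k}H_tC_t-\beta H_{t-1}C_{t-1}+\Psi_tC_t,$$ and $H_1C_1=\tfrac12\Lambda_{-k}H_0C_0+\Psi_0C_0$.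
   Context: $A$ has eigenvalues $\lambda_1\geq\dots\geq\lambda_d\geq0$, orthonormal eigenvectors $u_i$; $U_k:=[u_1..u_k]$, $U_{-k}:=[u_{k+1}..u_d]$, $\Lambda_k:=\mathrm{diag}(\lambda_1..\lambda_k)$, $\Lambda_{-k}:=\mathrm{diag}(\lambda_{k+1}..\lambda_d)$. QR: $Y=XR$, $X^\top X=I_k$, $R$ upper triangular with nonnegative diagonal; $\theta_k(U,X):=\arccos\sigma_{\min}(U^\top X)$. ANPM: $(X_1,R_1)=\mathrm{QR}(\tfrac12AX_0+\Xi_0)$; for $t\geq1$, $Y_{t+1}=AX_t-\beta X_{t-1}R_t^{-1}+\Xi_t$, $(X_{t+1},R_{t+1})=\mathrm{QR}(Y_{t+1})$. $H_t:=(U_{-k}^\top X_t)(U_k^\top X_t)^{-1}$; $\Psi_t:=(U_{-k}^\top\Xi_t)(U_k^\top X_t)^{-1}$; $E_t:=\Lambda_k^{-1}(U_k^\top\Xi_t)(U_k^\top X_t)^{-1}$; $G_0:=(I_k/2+E_0)^{-1}$, $G_{t+1}:=(I_k-\beta\Lambda_k^{-1}G_t\Lambda_k^{-1}+E_{t+1})^{-1}$; $C_0:=I_k$ and $C_t:=\Lambda_kG_{t-1}^{-1}\Lambda_kG_{t-2}^{-1}\cdots\Lambda_kG_0^{-1}$ for $t\geq1$. *)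

(* Defs.v *)
From HB Require Import structures.
From mathcomp Require Import all_boot all_order all_algebra.
From mathcomp Require Import classical_sets reals trigo.
Set Implicit Arguments. Unset Strict Implicit. Unset Printing Implicit Defensive.
Import Order.TTheory GRing.Theory Num.Theory.
Local Open Scope ring_scope.

Section Defs.
Variable R : realType.

Definition vnorm n (v : 'cV[R]_n) : R := Num.sqrt (\sum_i v i 0 ^+ 2).

Definition spec_norm p q (M : 'M[R]_(p, q)) : R :=
  sup [set vnorm (M *m v) | v in [set v : 'cV[R]_q | vnorm v = 1]]%classic.

Definition sigma_min p q (M : 'M[R]_(p, q)) : R :=
  inf [set vnorm (M *m v) | v in [set v : 'cV[R]_q | vnorm v = 1]]%classic.

Definition theta_k d k (U X : 'M[R]_(d, k)) : R := acos (sigma_min (U^T *m X)).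

Definition is_QR d k (Y X : 'M[R]_(d, k)) (Rm : 'M[R]_k) : Prop :=
  [/\ Y = X *m Rm, X^T *m X = 1%:M,
      (forall i j : 'I_k, (j < i)%N -> Rm i j = 0) &
      (forall i : 'I_k, 0 <= Rm i i)].

(* Notation of the paper, for d = k + m:  U_k = lsubmx U, U_{-k} = rsubmx U. *)
Variables (k m : nat) (U : 'M[R]_(k + m)) (lam : 'I_(k + m) -> R) (beta : R)
  (X Xi : nat -> 'M[R]_(k + m, k)).

Definition Lam_k : 'M[R]_k := diag_mx (\row_(i < k) lam (lshift m i)).
Definition Lam_mk : 'M[R]_m := diag_mx (\row_(j < m) lam (rshift k j)).

Definition H_ (t : nat) : 'M[R]_(m, k) :=
  ((rsubmx U)^T *m X t) *m invmx ((lsubmx U)^T *m X t).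
Definition Psi_ (t : nat) : 'M[R]_(m, k) :=
  ((rsubmx U)^T *m Xi t) *m invmx ((lsubmx U)^T *m X t).
Definition E_ (t : nat) : 'M[R]_k :=
  invmx Lam_k *m ((lsubmx U)^T *m Xi t) *m invmx ((lsubmx U)^T *m X t).

Fixpoint G_ (t : nat) : 'M[R]_k :=
  match t with
  | 0 => invmx (2^-1 *: 1%:M + E_ 0)
  | t'.+1 => invmx (1%:M - beta *: (invmx Lam_k *m G_ t' *m invmx Lam_k) + E_ t)
  end.

Fixpoint C_ (t : nat) : 'M[R]_k :=
  match t with
  | 0 => 1%:M
  | t'.+1 => Lam_k *m invmx (G_ t') *m C_ t'
  end.

End Defs.

(* 1-based access lambda_j (j in 1..n) to the eigenvalue family lam : 'I_n -> R
   (value 0 outside the valid range, never used there). *)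
Definition lambda_ (R : realType) n (lam : 'I_n -> R) (j : nat) : R :=
  match @insub nat (fun i => (i < n)%N) 'I_n j.-1 with Some i => lam i | None => 0 end.

(* Main.v *)
Require Import Defs.
From HB Require Import structures.
From mathcomp Require Import all_boot all_order all_algebra.
From mathcomp Require Import classical_sets reals trigo.
From mathcomp Require Import ring lra.
Import Order.TTheory GRing.Theory Num.Theory.
Local Open Scope ring_scope.
Set Warnings "-notation-overridden,-ambiguous-paths".
Set Implicit Arguments. Unset Strict Implicit.
Section Norms.
Variable R : realType.

Definition ob p q (M : 'M[R]_(p, q)) (b : R) :=
  forall v : 'cV[R]_q, vnorm (M *m v) <= b * vnorm v.

Definition dot n (u v : 'cV[R]_n) : R := \sum_i u i 0 * v i 0.
Arguments dot {n}.

Lemma vnormE n (v : 'cV[R]_n) : vnorm v = Num.sqrt (dot v v).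
Proof. by rewrite /vnorm /dot; congr Num.sqrt; apply: eq_bigr => i _; rewrite expr2. Qed.

Lemma dot_ge0 n (v : 'cV[R]_n) : 0 <= dot v v.
Proof. by apply: sumr_ge0 => i _; rewrite -expr2 sqr_ge0. Qed.

Lemma vnorm_ge0 n (v : 'cV[R]_n) : 0 <= vnorm v.
Proof. exact: sqrtr_ge0. Qed.

Lemma vnorm_sqr n (v : 'cV[R]_n) : vnorm v ^+ 2 = dot v v.
Proof. by rewrite vnormE sqr_sqrtr // dot_ge0. Qed.

Lemma vnorm_eq0 n (v : 'cV[R]_n) : vnorm v = 0 -> v = 0.
Proof.
move=> h; have h2 : dot v v = 0 by rewrite -vnorm_sqr h expr0n.
apply/matrixP => i j; rewrite (ord1 j) mxE.
have hp : forall x : 'I_n, xpredT x -> 0 <= v x 0 * v x 0.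
  by move=> x _; rewrite -expr2 sqr_ge0.
have /eqP := @psumr_eq0P R _ xpredT (fun i => v i 0 * v i 0) hp h2 i isT.
by rewrite mulf_eq0 orbb => /eqP.
Qed.

Lemma dotZl n a (u v : 'cV[R]_n) : dot (a *: u) v = a * dot u v.
Proof. by rewrite /dot mulr_sumr; apply: eq_bigr => i _; rewrite mxE mulrA. Qed.
Lemma dotZr n a (u v : 'cV[R]_n) : dot u (a *: v) = a * dot u v.
Proof. by rewrite /dot mulr_sumr; apply: eq_bigr => i _; rewrite mxE mulrCA. Qed.
Lemma dotDl n (u w v : 'cV[R]_n) : dot (u + w) v = dot u v + dot w v.
Proof. by rewrite /dot -big_split; apply: eq_bigr => i _; rewrite mxE mulrDl. Qed.
Lemma dotDr n (u w v : 'cV[R]_n) : dot v (u + w) = dot v u + dot v w.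
Proof. by rewrite /dot -big_split; apply: eq_bigr => i _; rewrite mxE mulrDr. Qed.
Lemma dotC n (u v : 'cV[R]_n) : dot u v = dot v u.
Proof. by rewrite /dot; apply: eq_bigr => i _; rewrite mulrC. Qed.

Lemma vnormZ n a (v : 'cV[R]_n) : vnorm (a *: v) = `|a| * vnorm v.
Proof.
rewrite !vnormE dotZl dotZr mulrA -expr2 sqrtrM ?sqr_ge0 //.
by rewrite sqrtr_sqr.
Qed.

Lemma vnormN n (v : 'cV[R]_n) : vnorm (- v) = vnorm v.
Proof. by rewrite -scaleN1r vnormZ normrN normr1 mul1r. Qed.

Lemma CS n (u v : 'cV[R]_n) : dot u v <= vnorm u * vnorm v.
Proof.
set a := vnorm u; set b := vnorm v.
have ha : 0 <= a by apply: vnorm_ge0.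
have hb : 0 <= b by apply: vnorm_ge0.
have h := dot_ge0 (b *: u - a *: v : 'cV[R]_n).
rewrite -scaleNr dotDl !dotDr !dotZl !dotZr -!vnorm_sqr -/a -/b (dotC v u) in h.
have h2 : 0 <= 2 * (a * b) * (a * b - dot u v).
  by move: h; congr (_ <= _); ring.
have [ab0|abpos] := eqVneq (a * b) 0.
  move: ab0 => /eqP; rewrite mulf_eq0 => /orP[] /eqP h0.
    rewrite {1}(vnorm_eq0 h0) /dot big1 ?mulr_ge0 // => i _; by rewrite mxE mul0r.
  rewrite {1}(vnorm_eq0 h0) /dot big1 ?mulr_ge0 // => i _; by rewrite mxE mulr0.
have abp : 0 < a * b by rewrite lt_neqAle eq_sym abpos mulr_ge0.
rewrite -subr_ge0; move: h2; rewrite pmulr_rge0 //.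
by rewrite mulr_gt0.
Qed.

Lemma vnormD n (u v : 'cV[R]_n) : vnorm (u + v) <= vnorm u + vnorm v.
Proof.
rewrite -(ler_pXn2r (n:=2)) ?nnegrE ?addr_ge0 ?vnorm_ge0 //.
rewrite vnorm_sqr dotDl !dotDr -!vnorm_sqr (dotC v u).
have := CS u v; move=> h.
have -> : (vnorm u + vnorm v) ^+ 2 = vnorm u ^+2 + vnorm v ^+ 2 + 2 * (vnorm u * vnorm v) by ring.
lra.
Qed.

Lemma vnormB_ge n (u v : 'cV[R]_n) : vnorm u - vnorm v <= vnorm (u + v).
Proof.
have := vnormD (u + v) (- v); rewrite addrK vnormN; lra.
Qed.

End Norms.
Section Ops.
Variable R : realType.

Lemma ob_mul p q r (A : 'M[R]_(p, q)) (B : 'M[R]_(q, r)) a b :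
  ob A a -> ob B b -> 0 <= a -> ob (A *m B) (a * b).
Proof.
move=> hA hB ha v; rewrite -mulmxA -mulrA.
apply: le_trans (hA _) _; exact: ler_wpM2l.
Qed.

Lemma ob_add p q (A B : 'M[R]_(p, q)) a b :
  ob A a -> ob B b -> ob (A + B) (a + b).
Proof.
move=> hA hB v; rewrite mulmxDl mulrDl.
apply: le_trans (vnormD _ _) _; exact: lerD.
Qed.

Lemma ob_scale p q (A : 'M[R]_(p, q)) a c :
  ob A a -> ob (c *: A) (`|c| * a).
Proof.
move=> hA v; rewrite -scalemxAl vnormZ -mulrA; exact: ler_wpM2l.
Qed.

Lemma ob_opp p q (A : 'M[R]_(p, q)) a : ob A a -> ob (- A) a.
Proof. by move=> hA v; rewrite mulNmx vnormN. Qed.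

Lemma ob_le p q (A : 'M[R]_(p, q)) a a' : ob A a -> a <= a' -> ob A a'.
Proof.
move=> hA h v; apply: le_trans (hA v) _; apply: ler_wpM2r => //; exact: vnorm_ge0.
Qed.

Lemma ob1 q : ob (1%:M : 'M[R]_q) 1.
Proof. by move=> v; rewrite mul1mx mul1r. Qed.

Lemma vnorm_neq0 n (v : 'cV[R]_n) : v != 0 -> 0 < vnorm v.
Proof.
move=> hv; rewrite lt_neqAle vnorm_ge0 andbT eq_sym; apply/eqP => h.
by move: hv; rewrite (vnorm_eq0 h) eqxx.
Qed.

Lemma vnorm_normalize n (v : 'cV[R]_n) : v != 0 -> vnorm ((vnorm v)^-1 *: v) = 1.
Proof.
move=> hv; have hp := vnorm_neq0 hv.
by rewrite vnormZ ger0_norm ?invr_ge0 ?ltW // mulVf // gt_eqF.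
Qed.

Lemma vnorm0 n : vnorm (0 : 'cV[R]_n) = 0.
Proof. by rewrite -(scale0r (0 : 'cV[R]_n)) vnormZ normr0 mul0r. Qed.

Lemma lb_kernel n (M : 'M[R]_n) c :
  0 < c -> (forall v : 'cV[R]_n, c * vnorm v <= vnorm (M *m v)) ->
  forall v : 'cV[R]_n, M *m v = 0 -> v = 0.
Proof.
move=> hc h v hv; have := h v; rewrite hv.
have -> : vnorm (0 : 'cV[R]_n) = 0.
  by rewrite -(scale0r (0 : 'cV[R]_n)) vnormZ normr0 mul0r.
move=> h2; apply: vnorm_eq0; apply/eqP; rewrite eq_le vnorm_ge0 andbT.
by rewrite -(pmulr_rle0 _ hc).
Qed.

Lemma lb_unit n (M : 'M[R]_n) c :
  0 < c -> (forall v : 'cV[R]_n, c * vnorm v <= vnorm (M *m v)) -> M \in unitmx.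
Proof.
move=> hc h; rewrite -unitmx_tr -row_free_unit -kermx_eq0.
apply/eqP/row_matrixP => i; rewrite row0.
have h1 : row i (kermx M^T) *m M^T = 0 by apply/sub_kermxP; exact: row_sub.
have h2 : M *m (row i (kermx M^T))^T = 0.
  by have := congr1 trmx h1; rewrite trmx_mul trmxK trmx0.
have := lb_kernel hc h h2; move/(congr1 trmx); rewrite trmxK trmx0; by [].
Qed.

Lemma lb_inv n (M : 'M[R]_n) c :
  0 < c -> (forall v : 'cV[R]_n, c * vnorm v <= vnorm (M *m v)) -> ob (invmx M) c^-1.
Proof.
move=> hc h v; have hu := lb_unit hc h.
have := h (invmx M *m v); rewrite mulKVmx // => h2.
by rewrite ler_pdivlMl.
Qed.

Lemma abs_le_vnorm n (v : 'cV[R]_n) i : `|v i 0| <= vnorm v.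
Proof.
rewrite /vnorm -sqrtr_sqr ler_sqrt; last by apply: sumr_ge0 => j _; exact: sqr_ge0.
rewrite (bigD1 i) //= lerDl; apply: sumr_ge0 => j _; exact: sqr_ge0.
Qed.

Lemma vnorm_le_sum n (v : 'cV[R]_n) : vnorm v <= \sum_i `|v i 0|.
Proof.
rewrite -(ler_pXn2r (n:=2)) ?nnegrE ?vnorm_ge0 ?sumr_ge0 //.
rewrite vnorm_sqr /dot expr2 mulr_suml; apply: ler_sum => i _.
rewrite mulr_sumr (bigD1 i) //= -normrM ler_wpDr ?real_ler_norm ?realM ?num_real //.
by apply: sumr_ge0 => j _; rewrite -normrM normr_ge0.
Qed.

Lemma ob_crude p q (M : 'M[R]_(p, q)) : ob M (\sum_i \sum_j `|M i j|).
Proof.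
move=> v; apply: le_trans (vnorm_le_sum _) _.
rewrite mulr_suml; apply: ler_sum => i _; rewrite mxE.
apply: le_trans (ler_norm_sum _ _ _) _; rewrite mulr_suml; apply: ler_sum => j _.
rewrite normrM; apply: ler_wpM2l => //; exact: abs_le_vnorm.
Qed.

Lemma ob_spec p q (M : 'M[R]_(p, q)) b : spec_norm M <= b -> ob M b.
Proof.
move=> hb v; have [->|hv] := eqVneq v 0.
  by rewrite mulmx0 !vnorm0 mulr0.
set w := (vnorm v)^-1 *: v.
have hw : vnorm w = 1 by apply: vnorm_normalize.
have hp := vnorm_neq0 hv.
have hub : has_ubound [set vnorm (M *m v) | v in [set v : 'cV[R]_q | vnorm v = 1]]%classic.
  exists (\sum_i \sum_j `|M i j|) => x [u hu <-].
  by have := ob_crude M u; rewrite hu mulr1.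
have hin : vnorm (M *m w) <= spec_norm M.
  by apply: ub_le_sup => //; exists w.
have e : vnorm (M *m w) = (vnorm v)^-1 * vnorm (M *m v).
  by rewrite /w -scalemxAr vnormZ ger0_norm // invr_ge0 ltW.
rewrite e in hin; move: (le_trans hin hb).
by rewrite ler_pdivrMl // mulrC.
Qed.

End Ops.
Section Sig.
Variable R : realType.

Lemma exists_unit k : (0 < k)%N -> exists v : 'cV[R]_k, vnorm v = 1.
Proof.
move=> kp; set v0 := (const_mx 1 : 'cV[R]_k).
have hv : v0 != 0.
  apply/eqP => h; have := congr1 (fun M : 'cV[R]_k => M (Ordinal kp) 0) h.
  by rewrite !mxE => /eqP; rewrite oner_eq0.
by exists ((vnorm v0)^-1 *: v0); apply: vnorm_normalize.
Qed.

Lemma sigma_props k (Z : 'M[R]_k) : (0 < k)%N ->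
  (forall v : 'cV[R]_k, vnorm (Z *m v) <= vnorm v) ->
  [/\ 0 <= sigma_min Z, sigma_min Z <= 1 &
      forall v : 'cV[R]_k, sigma_min Z * vnorm v <= vnorm (Z *m v)].
Proof.
move=> kp hZ.
set S := [set vnorm (Z *m v) | v in [set v : 'cV[R]_k | vnorm v = 1]]%classic.
have hlb : has_lbound S by exists 0 => x [u _ <-]; exact: vnorm_ge0.
have [e he] := exists_unit kp.
have hne : nonempty S by exists (vnorm (Z *m e)); exists e.
have hinf : forall u : 'cV[R]_k, vnorm u = 1 -> sigma_min Z <= vnorm (Z *m u).
  by move=> u hu; apply: ge_inf => //; exists u.
split.
- by apply: lb_le_inf => // x [u _ <-]; exact: vnorm_ge0.
- by apply: le_trans (hinf e he) _; rewrite -he.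
- move=> v; have [->|hv] := eqVneq v 0.
    by rewrite mulmx0 !vnorm0 mulr0.
  have hp := vnorm_neq0 hv.
  have h := hinf _ (vnorm_normalize hv).
  have hn : 0 <= (vnorm v)^-1 by rewrite invr_ge0 ltW.
  rewrite -scalemxAr vnormZ (ger0_norm hn) in h.
  by rewrite mulrC -ler_pdivlMl.
Qed.

Lemma cos_theta d k (U X : 'M[R]_(d, k)) : (0 < k)%N ->
  (forall v : 'cV[R]_k, vnorm (U^T *m X *m v) <= vnorm v) ->
  cos (theta_k U X) = sigma_min (U^T *m X).
Proof.
move=> kp h; have [h0 h1 _] := sigma_props kp h.
rewrite /theta_k acosK // in_itv /=; apply/andP; split => //.
by apply: le_trans h0; rewrite lerN10.
Qed.

End Sig.
Lemma num_facts (R : realType) (lk s : R) : 0 <= s -> 2 * s < lk ->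
  let bb := 32^-1 * (lk - 2 * s) in let ee := lk^-1 * bb in
  [/\ 0 <= ee, ee <= 32^-1 &
      s ^+ 2 * (lk^-1 * ((2^-1 - ee)^-1 * lk^-1)) <= 2^-1].
Proof.
move=> hs hl bb ee.
have lk0 : 0 < lk by apply: le_lt_trans hl; rewrite mulr_ge0.
have lkn : lk != 0 by rewrite gt_eqF.
set r := s / lk.
have hr0 : 0 <= r by rewrite /r divr_ge0 // ltW.
have hr1 : r < 2^-1.
  by rewrite /r ltr_pdivrMr //; lra.
have hee : ee = (1 - 2 * r) / 32 by rewrite /ee /bb /r; field.
rewrite hee; split.
- by apply: divr_ge0 => //; lra.
- by rewrite ler_pdivrMr //; lra.
have hD : 0 < 2^-1 - (1 - 2 * r) / 32 by lra.
have -> : s ^+ 2 * (lk^-1 * ((2^-1 - (1 - 2 * r) / 32)^-1 * lk^-1))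
         = r ^+ 2 / (2^-1 - (1 - 2 * r) / 32).
  rewrite /r; field; rewrite lkn /= gt_eqF //; lra.
rewrite ler_pdivrMr //.
have : 64 * r ^+ 2 - 2 * r - 15 <= 0 by nra.
nra.
Qed.
Fixpoint Pp (R : realType) k (Rs : nat -> 'M[R]_k) (t : nat) : 'M[R]_k :=
  match t with 0 => 1%:M | t'.+1 => Rs t *m Pp Rs t' end.

Lemma dotE (R : realType) n (u v : 'cV[R]_n) : dot u v = (u^T *m v) 0 0.
Proof. by rewrite /dot mxE; apply: eq_bigr => i _; rewrite mxE. Qed.

Lemma vnorm_le (R : realType) n p (u : 'cV[R]_n) (v : 'cV[R]_p) :
  dot u u <= dot v v -> vnorm u <= vnorm v.
Proof. by move=> h; rewrite !vnormE ler_sqrt // dot_ge0. Qed.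

Section Main.
Variables (R : realType) (k m : nat) (beta : R) (A U : 'M[R]_(k + m))
  (lam : 'I_(k + m) -> R) (X Xi : nat -> 'M[R]_(k + m, k)) (Rs : nat -> 'M[R]_k).
Hypotheses (kp : (0 < k)%N) (hA : A^T = A) (hU : U^T *m U = 1%:M)
  (hev : forall i, A *m col i U = lam i *: col i U)
  (hmono : forall i j : 'I_(k + m), (i <= j)%N -> lam j <= lam i)
  (hbeta : 0 < beta) (hgap : 2 * Num.sqrt beta < lambda_ lam k)
  (hX0 : (X 0%N)^T *m X 0%N = 1%:M)
  (hcos0 : cos (theta_k (lsubmx U) (X 0%N)) > 0)
  (hQR0 : is_QR (2^-1 *: (A *m X 0%N) + Xi 0%N) (X 1%N) (Rs 1%N))
  (hQR : forall t : nat, (1 <= t)%N ->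
     is_QR (A *m X t - beta *: (X t.-1 *m invmx (Rs t)) + Xi t) (X t.+1) (Rs t.+1))
  (hXik : forall t : nat,
     spec_norm ((lsubmx U)^T *m Xi t)
       <= 32^-1 * (lambda_ lam k - 2 * Num.sqrt beta) * cos (theta_k (lsubmx U) (X t))).

Local Notation Uk := (lsubmx U).
Local Notation Um := (rsubmx U).
Local Notation lk := (lambda_ lam k).
Local Notation L := (Lam_k lam).
Local Notation Z t := (Uk^T *m X t).

Lemma lk_le (i : 'I_k) : lk <= lam (lshift m i).
Proof.
have hlt : (k.-1 < k + m)%N by rewrite -(prednK kp) addSn ltnS leq_addr.
rewrite /lambda_ (insubT (fun i => (i < k + m)%N) hlt) /=.
apply: hmono => /=; rewrite -ltnS (prednK kp); exact: ltn_ord.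
Qed.

Lemma sqb_ge0 : 0 <= Num.sqrt beta. Proof. exact: sqrtr_ge0. Qed.

Lemma lk_gt0 : 0 < lk.
Proof. by apply: le_lt_trans hgap; rewrite mulr_ge0 // sqb_ge0. Qed.

Lemma AU_entry i c : (A *m U) i c = lam c * U i c.
Proof.
have := congr1 (fun M : 'cV[R]_(k + m) => M i 0) (hev c); rewrite !mxE => <-.
by apply: eq_bigr => l _; rewrite mxE.
Qed.

Lemma UkA : Uk^T *m A = L *m Uk^T.
Proof.
have h : A *m Uk = Uk *m L.
  apply/matrixP => i j; rewrite mulmx_lsub mul_mx_diag [RHS]mxE [LHS]mxE AU_entry mulrC.
  by rewrite !mxE.
by rewrite -hA -trmx_mul h trmx_mul tr_diag_mx.
Qed.

Lemma UmA : Um^T *m A = Lam_mk lam *m Um^T.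
Proof.
have h : A *m Um = Um *m Lam_mk lam.
  apply/matrixP => i j; rewrite mulmx_rsub mul_mx_diag [RHS]mxE [LHS]mxE AU_entry mulrC.
  by rewrite !mxE.
by rewrite -hA -trmx_mul h trmx_mul tr_diag_mx.
Qed.

Lemma XtX t : (X t)^T *m X t = 1%:M.
Proof. by case: t => [|t] //; case: t => [|t]; [case: hQR0 | case: (hQR (isT : (1 <= t.+1)%N))]. Qed.

Lemma Uk_contr (w : 'cV[R]_(k + m)) : vnorm (Uk^T *m w) <= vnorm w.
Proof.
apply: vnorm_le.
have e1 : dot w w = dot (U^T *m w) (U^T *m w).
  by rewrite !dotE trmx_mul trmxK mulmxA -(mulmxA _ U) (mulmx1C hU) mulmx1.
rewrite e1.
have -> : U^T *m w = col_mx (Uk^T *m w) (Um^T *m w).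
  by rewrite -{1}(hsubmxK U) tr_row_mx mul_col_mx.
rewrite /dot big_split_ord /=.
rewrite ler_wpDr //; last first.
  apply: ler_sum => i _; rewrite col_mxEu //.
by apply: sumr_ge0 => i _; rewrite -expr2 sqr_ge0.
Qed.

Lemma Z_contr t (v : 'cV[R]_k) : vnorm (Z t *m v) <= vnorm v.
Proof.
rewrite -mulmxA; apply: le_trans (Uk_contr _) _; apply: vnorm_le.
by rewrite !dotE trmx_mul mulmxA -(mulmxA _ (X t)^T) XtX mulmx1.
Qed.

Lemma L_lb (y : 'cV[R]_k) : lk * vnorm y <= vnorm (L *m y).
Proof.
have hl := lk_gt0.
rewrite -(ger0_norm (ltW hl)) -vnormZ; apply: vnorm_le.
rewrite /dot; apply: ler_sum => i _.
rewrite /Lam_k mul_diag_mx !mxE -!expr2 !exprMn.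
apply: ler_wpM2r; first exact: sqr_ge0.
have hli := lk_le i.
rewrite ler_sqr ?nnegrE.
- exact hli.
- exact (ltW hl).
- by apply: le_trans (ltW hl) _.
Qed.

Lemma L_unit : L \in unitmx.
Proof. exact: lb_unit lk_gt0 L_lb. Qed.

Lemma Linv_ob : ob (invmx L) lk^-1.
Proof. exact: lb_inv lk_gt0 L_lb. Qed.

Lemma cosZ t : cos (theta_k Uk (X t)) = sigma_min (Z t).
Proof. by apply: cos_theta => // v; apply: Z_contr. Qed.

Definition bb := 32^-1 * (lk - 2 * Num.sqrt beta).
Definition ee := lk^-1 * bb.

Lemma bb_ge0 : 0 <= bb.
Proof. rewrite /bb; apply: mulr_ge0; first by rewrite invr_ge0. by rewrite subr_ge0 ltW. Qed.

Lemma key t (w : 'cV[R]_k) : vnorm ((Uk^T *m Xi t) *m w) <= bb * vnorm (Z t *m w).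
Proof.
have [h0 h1 h2] := sigma_props kp (Z_contr t).
have := ob_spec (hXik t); rewrite cosZ => /(_ w) h.
have h' : vnorm ((Uk^T *m Xi t) *m w) <= bb * (sigma_min (Z t) * vnorm w).
  by rewrite mulrA.
apply: le_trans h' _; apply: ler_wpM2l; first exact: bb_ge0.
exact: h2.
Qed.

Lemma E_ob t : Z t \in unitmx -> ob (E_ U lam X Xi t) ee.
Proof.
move=> hZ y; rewrite /E_ -!mulmxA.
apply: le_trans (Linv_ob _) _; rewrite /ee -mulrA; apply: ler_wpM2l.
  by rewrite invr_ge0 ltW // lk_gt0.
have := key t (invmx (Z t) *m y).
by rewrite mulKVmx // -mulmxA.
Qed.
Lemma lb_pert q (B : 'M[R]_q) a c : 0 <= a -> ob B c ->
  forall v : 'cV[R]_q, (a - c) * vnorm v <= vnorm ((a *: 1%:M + B) *m v).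
Proof.
move=> ha hB v; rewrite mulmxDl -scalemxAl mul1mx.
apply: le_trans (vnormB_ge _ _); rewrite vnormZ ger0_norm // mulrBl lerD2l lerN2.
exact: hB.
Qed.

Local Notation E t := (E_ U lam X Xi t).
Local Notation G t := (G_ U lam beta X Xi t).
Local Notation C t := (C_ U lam beta X Xi t).
Local Notation P t := (Pp Rs t).

Definition Mt t := match t with
  | 0 => 2^-1 *: 1%:M + E 0
  | t'.+1 => 1%:M - beta *: (invmx L *m G t' *m invmx L) + E t end.

Lemma G_Mt t : G t = invmx (Mt t). Proof. by case: t. Qed.

Definition KK := (2^-1 - ee)^-1.

Lemma numf : [/\ 0 <= ee, ee <= 32^-1 &
      beta * (lk^-1 * (KK * lk^-1)) <= 2^-1].
Proof.
by have := num_facts sqb_ge0 hgap; rewrite sqr_sqrtr ?(ltW hbeta).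
Qed.

Lemma D_gt0 : 0 < 2^-1 - ee.
Proof. have [_ h _] := numf; apply: lt_le_trans (_ : 0 < 2^-1 - 32^-1) _.
  by rewrite subr_gt0 ltf_pV2 ?posrE // ltr_nat.
by rewrite lerD2l lerN2.
Qed.

Definition Inv t := [/\ Z t \in unitmx, Mt t \in unitmx, ob (G t) KK,
  Z t *m P t = C t *m Z 0%N & (P t \in unitmx /\ C t \in unitmx)].

Lemma Z0_unit : Z 0%N \in unitmx.
Proof.
have [h0 h1 h2] := sigma_props kp (Z_contr 0).
have hs : 0 < sigma_min (Z 0%N) by rewrite -cosZ.
exact: lb_unit hs h2.
Qed.

Lemma Inv0 : Inv 0.
Proof.
have hE := E_ob Z0_unit.
have h2 : 0 <= (2^-1 : R) by rewrite invr_ge0.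
have hlb := lb_pert h2 hE.
split => //.
- exact: Z0_unit.
- exact: lb_unit D_gt0 hlb.
- exact: lb_inv D_gt0 hlb.
- by rewrite /= mulmx1 mul1mx.
- by split; exact: unitmx1.
Qed.

Lemma C_S t : C t.+1 = L *m Mt t *m C t.
Proof. by rewrite [LHS]/= G_Mt invmxK. Qed.

Lemma P_S t : P t.+1 = Rs t.+1 *m P t.
Proof. by []. Qed.

Lemma Inv_next t : Inv t -> Z t.+1 *m P t.+1 = C t.+1 *m Z 0%N -> Inv t.+1.
Proof.
case=> hZ hM hG hEq [hP hC] hEq1.
have hC1 : C t.+1 \in unitmx by rewrite C_S !unitmx_mul L_unit hM hC.
have hZP : Z t.+1 *m P t.+1 \in unitmx by rewrite hEq1 unitmx_mul hC1 Z0_unit.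
move: hZP; rewrite P_S mulmxA !unitmx_mul => /andP[/andP[hZ1 hR1] _].
have hP1 : P t.+1 \in unitmx by rewrite P_S unitmx_mul hR1 hP.
have [_ _ hn] := numf.
set c := beta * (lk^-1 * (KK * lk^-1)) + ee.
have hB : ob (- (beta *: (invmx L *m G t *m invmx L)) + E t.+1) c.
  apply: ob_add; last exact: E_ob.
  apply: ob_opp.
  have hi : 0 <= lk^-1 by rewrite invr_ge0 ltW // lk_gt0.
  have hK : 0 <= KK by rewrite /KK invr_ge0 ltW // D_gt0.
  have h1 : ob (invmx L *m G t) (lk^-1 * KK) by apply: ob_mul => //; exact: Linv_ob.
  have h2 : ob (invmx L *m G t *m invmx L) (lk^-1 * KK * lk^-1).
    by apply: ob_mul => //; [exact: Linv_ob | exact: mulr_ge0].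
  apply: ob_le (ob_scale beta h2) _.
  by rewrite ger0_norm ?(ltW hbeta) // !mulrA (mulrC beta) -!mulrA.
have hMe : Mt t.+1 = 1 *: 1%:M + (- (beta *: (invmx L *m G t *m invmx L)) + E t.+1).
  by rewrite /= scale1r addrA.
have hlb : forall v : 'cV[R]_k, (2^-1 - ee) * vnorm v <= vnorm (Mt t.+1 *m v).
  move=> v; rewrite hMe; apply: le_trans (lb_pert ler01 hB v).
  apply: ler_wpM2r; first exact: vnorm_ge0.
  rewrite /c; move: hn; set u := beta * _; move=> hn.
  lra.
split => //.
- exact: lb_unit D_gt0 hlb.
- by rewrite G_Mt; exact: lb_inv D_gt0 hlb.
Qed.
Lemma LE_Z t : Z t \in unitmx -> L *m E t *m Z t = Uk^T *m Xi t.
Proof.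
move=> hZ; rewrite /E_ -mulmxA mulmxKV // mulmxA mulmxV ?L_unit // mul1mx //.
Qed.

Lemma Eq1 : Z 1%N *m P 1%N = C 1%N *m Z 0%N.
Proof.
case: hQR0 => hY _ _ _.
have hP0 : P 0%N = 1%:M by [].
have hC0 : C 0%N = 1%:M by [].
rewrite P_S hP0 mulmx1 -mulmxA -hY mulmxDr -scalemxAr (mulmxA _ A) UkA.
rewrite C_S hC0 mulmx1 [Mt 0]/= mulmxDr mulmxDl -(LE_Z Z0_unit).
by rewrite -scalemxAr mulmx1 -scalemxAl -!mulmxA.
Qed.

Lemma EqS n : Inv n -> Inv n.+1 -> Z n.+2 *m P n.+2 = C n.+2 *m Z 0%N.
Proof.
case=> hZn hMn hGn hEqn [hPn hCn]; case=> hZ1 hM1 hG1 hEq1 [hP1 hC1].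
have hR1 : Rs n.+1 \in unitmx.
  by move: hP1; rewrite P_S unitmx_mul => /andP[].
case: (hQR (isT : (0 < n.+1)%N)) => hY _ _ _; simpl in hY.
have hr : C n.+2 *m Z 0%N = L *m C n.+1 *m Z 0%N - beta *: (C n *m Z 0%N)
     + L *m E n.+1 *m C n.+1 *m Z 0%N.
  rewrite C_S [Mt n.+1]/= !mulmxDr ?mulmxBr !mulmxDl ?mulmxBl mulmx1.
  rewrite mulmxN -scalemxAr !mulNmx -!scalemxAl.
  have -> : L *m (invmx L *m G n *m invmx L) *m C n.+1 = C n.
    have hGu : G n \in unitmx by rewrite G_Mt unitmx_inv.
    by rewrite !mulmxA mulmxV ?L_unit // mul1mx mulmxKV ?L_unit // mulmxV // mul1mx.
  by [].
rewrite hr P_S mulmxA -(mulmxA (Uk^T)) -hY.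
rewrite !mulmxDr !mulmxDl ?mulmxN ?mulNmx.
have t1 : Uk^T *m (A *m X n.+1) *m P n.+1 = L *m C n.+1 *m Z 0%N.
  by rewrite (mulmxA _ A) UkA -(mulmxA L) -(mulmxA L) hEq1 mulmxA.
have t2 : Uk^T *m (beta *: (X n *m invmx (Rs n.+1))) *m P n.+1 = beta *: (C n *m Z 0%N).
  rewrite -scalemxAr -scalemxAl; congr (_ *: _).
  by rewrite P_S -!mulmxA mulKmx // mulmxA hEqn.
have t3 : Uk^T *m Xi n.+1 *m P n.+1 = L *m E n.+1 *m C n.+1 *m Z 0%N.
  by rewrite -(LE_Z hZ1) -(mulmxA (L *m E n.+1)) hEq1 mulmxA.
by rewrite t1 t2 t3.
Qed.

Lemma Inv_all t : Inv t.
Proof.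
have : Inv t /\ Inv t.+1.
  elim: t => [|n [h1 h2]]; first by split; [exact: Inv0 | exact: Inv_next Inv0 Eq1].
  by split => //; apply: Inv_next h2 (EqS h1 h2).
by case.
Qed.

Lemma C_eq t : C t = Z t *m P t *m invmx (Z 0%N).
Proof. by case: (Inv_all t) => _ _ _ -> _; rewrite mulmxK // Z0_unit. Qed.

Lemma HC t : H_ U X t *m C t = Um^T *m X t *m P t *m invmx (Z 0%N).
Proof.
case: (Inv_all t) => hZ _ _ _ _.
by rewrite /H_ C_eq mulmxA mulmxA mulmxKV.
Qed.

Lemma PsiC t : Psi_ U X Xi t *m C t = Um^T *m Xi t *m P t *m invmx (Z 0%N).
Proof.
case: (Inv_all t) => hZ _ _ _ _.
by rewrite /Psi_ C_eq mulmxA mulmxA mulmxKV.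
Qed.

Lemma final1 n :
  H_ U X n.+2 *m C n.+2
  = Lam_mk lam *m H_ U X n.+1 *m C n.+1 - beta *: (H_ U X n *m C n)
    + Psi_ U X Xi n.+1 *m C n.+1.
Proof.
case: (Inv_all n.+1) => _ _ _ _ [hP1 _].
have hR1 : Rs n.+1 \in unitmx.
  by move: hP1; rewrite P_S unitmx_mul => /andP[].
case: (hQR (isT : (0 < n.+1)%N)) => hY _ _ _; simpl in hY.
rewrite -mulmxA !HC PsiC P_S (mulmxA (Um^T *m X n.+2)) -(mulmxA Um^T) -hY.
rewrite !mulmxDr !mulmxDl ?mulmxN ?mulNmx (mulmxA _ A) UmA.
have t2 : Um^T *m (beta *: (X n *m invmx (Rs n.+1))) *m P n.+1 *m invmx (Z 0%N)
   = beta *: (Um^T *m X n *m P n *m invmx (Z 0%N)).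
  rewrite -scalemxAr -!scalemxAl; congr (_ *: _).
  by rewrite P_S -!mulmxA mulKmx.
by rewrite t2 -!mulmxA.
Qed.

Lemma final0 :
  H_ U X 1%N *m C 1%N
  = 2^-1 *: (Lam_mk lam *m H_ U X 0%N *m C 0%N) + Psi_ U X Xi 0%N *m C 0%N.
Proof.
case: hQR0 => hY _ _ _.
have hP0 : P 0%N = 1%:M by [].
rewrite -mulmxA !HC PsiC P_S hP0 mulmx1 -(mulmxA Um^T) -hY.
rewrite !mulmxDr !mulmxDl -!scalemxAr -!scalemxAl (mulmxA _ A) UmA.
by rewrite !mulmx1 -!mulmxA.
Qed.

End Main.
Unset Implicit Arguments.
Theorem lemma1 (R : realType) (k m : nat) (eps beta : R)
  (A U : 'M[R]_(k + m)) (lam : 'I_(k + m) -> R)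
  (X0 : 'M[R]_(k + m, k)) (X Xi : nat -> 'M[R]_(k + m, k)) (Rs : nat -> 'M[R]_k) :
  (* d = k + m > k >= 1 *)
  (0 < k)%N -> (0 < m)%N ->
  0 < eps < 1 ->
  (* A symmetric positive semidefinite *)
  A^T = A ->
  (forall v : 'cV[R]_(k + m), 0 <= (v^T *m A *m v) 0 0) ->
  (* eigenvalues lam_1 >= ... >= lam_d >= 0, orthonormal eigenvectors u_i = col i U *)
  U^T *m U = 1%:M ->
  (forall i : 'I_(k + m), A *m col i U = lam i *: col i U) ->
  (forall i j : 'I_(k + m), (i <= j)%N -> lam j <= lam i) ->
  (forall i : 'I_(k + m), 0 <= lam i) ->
  lambda_ lam k > lambda_ lam k.+1 ->
  0 < beta ->
  lambda_ lam k.+1 <= 2 * Num.sqrt beta < lambda_ lam k ->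
  (* X_0 in St(d,k) with cos theta_k(U_k, X_0) > 0 *)
  X0^T *m X0 = 1%:M ->
  cos (theta_k (lsubmx U) X0) > 0 ->
  (* ANPM iteration *)
  X 0%N = X0 ->
  is_QR (2^-1 *: (A *m X 0%N) + Xi 0%N) (X 1%N) (Rs 1%N) ->
  (forall t : nat, (1 <= t)%N ->
     is_QR (A *m X t - beta *: (X t.-1 *m invmx (Rs t)) + Xi t) (X t.+1) (Rs t.+1)) ->
  (* perturbation bounds, c = 1/32 *)
  (forall t : nat,
     spec_norm ((rsubmx U)^T *m Xi t)
       <= 32^-1 * (lambda_ lam k - 2 * Num.sqrt beta) * eps) ->
  (forall t : nat,
     spec_norm ((lsubmx U)^T *m Xi t)
       <= 32^-1 * (lambda_ lam k - 2 * Num.sqrt beta) * cos (theta_k (lsubmx U) (X t))) ->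
  (forall t : nat, (1 <= t)%N ->
     H_ U X t.+1 *m C_ U lam beta X Xi t.+1
     = Lam_mk lam *m H_ U X t *m C_ U lam beta X Xi t
       - beta *: (H_ U X t.-1 *m C_ U lam beta X Xi t.-1)
       + Psi_ U X Xi t *m C_ U lam beta X Xi t)
  /\
  H_ U X 1%N *m C_ U lam beta X Xi 1%N
  = 2^-1 *: (Lam_mk lam *m H_ U X 0%N *m C_ U lam beta X Xi 0%N)
    + Psi_ U X Xi 0%N *m C_ U lam beta X Xi 0%N.
Proof.
move=> kp mp heps hA hpsd hU hev hmono hlam0 hgap' hb hgap2 hX0 hcos0 hX0eq hQR0 hQR hXim hXik.
rewrite -hX0eq in hX0 hcos0.
have hgap : 2 * Num.sqrt beta < lambda_ lam k by case/andP: hgap2.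
split.
- move=> t; case: t => [//|n] _.
  exact: (final1 kp hA hU hev hmono hb hgap hX0 hcos0 hQR0 hQR hXik n).
- exact: (final0 kp hA hU hev hmono hb hgap hX0 hcos0 hQR0 hQR hXik).
Qed.
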